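(* Let $n\geq 3$, $m\geq 2$ and $k\geq 1$. The group $B_n/[B_n[m], B_n[m]](mk+1)$ is finite and isomorphic to the cyclic group $\mathbb{Z}_{mk+1}$.
   Context: $B_n$ is the braid group on $n$ strands with standard generators $\sigma_1,\dots,\sigma_{n-1}$. For $m\ge 2$, the level $m$ congruence subgroup $B_n[m]$ is the kernel of the mod $m$ reduction $\rho_m$ of the symplectic representation of $B_n$ obtained by specializing the (reducible) Burau representation at $t=-1$. $[B_n[m],B_n[m]]$ denotes its commutator subgroup. For positive integers $n,m,p$, $B_n/[B_n[m], B_n[m]](p)$ denotes the Coxeter-type quotient of $B_n/[B_n[m], B_n[m]]$ obtained by adding the relations $\sigma_i^p=1$ for all $1\le i\le n-1$, i.e. the quotient of $B_n$ by the normal subgroup generated by $[B_n[m],B_n[m]]$ and $\sigma_1^p$. *)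

(* Defs.v *)
(* The braid group B_n is presented by words in the
   generators sigma_i^{+-1}; groups defined by presentations are encoded as
   words modulo the least congruence generated by the defining relations. *)
From mathcomp Require Import all_boot all_order all_algebra.
Set Implicit Arguments. Unset Strict Implicit. Unset Printing Implicit Defensive.
Import GRing.Theory.
Local Open Scope ring_scope.

(* A letter (i, true) is sigma_{i+1}, (i, false) is sigma_{i+1}^{-1},
   for i : 'I_(n.-1) (so index 0 is sigma_1). *)
Definition letter (n : nat) := ('I_(n.-1) * bool)%type.
Definition word (n : nat) := seq (letter n).

Definition winv n (w : word n) : word n := rev (map (fun x => (x.1, ~~ x.2)) w).

Inductive braid_rel (n : nat) : word n -> word n -> Prop :=
| br_free (i : 'I_(n.-1)) (b : bool) : braid_rel [:: (i, b); (i, ~~ b)] [::]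
| br_far (i j : 'I_(n.-1)) : (i.+1 < j)%N ->
    braid_rel [:: (i, true); (j, true)] [:: (j, true); (i, true)]
| br_near (i j : 'I_(n.-1)) : val j = (val i).+1 ->
    braid_rel [:: (i, true); (j, true); (i, true)] [:: (j, true); (i, true); (j, true)].

Inductive cong_closure (A : Type) (R : seq A -> seq A -> Prop) : seq A -> seq A -> Prop :=
| cc_base u v : R u v -> cong_closure R u v
| cc_refl u : cong_closure R u u
| cc_sym u v : cong_closure R u v -> cong_closure R v u
| cc_trans u v w : cong_closure R u v -> cong_closure R v w -> cong_closure R u w
| cc_cat u u' v v' : cong_closure R u u' -> cong_closure R v v' ->
    cong_closure R (u ++ v) (u' ++ v').

Definition braid_eq n : word n -> word n -> Prop := cong_closure (@braid_rel n).

(* Burau representation (unreduced, n x n) specialized at t = -1, mod m.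
   sigma_i acts by the block [[1-t, t],[1, 0]] = [[2,-1],[1,0]] in rows/cols
   i, i+1; its inverse is [[0,1],[-1,2]]. *)
Definition burau_gen (n m : nat) (x : letter n) : 'M['Z_m]_n :=
  let i := val x.1 in
  \matrix_(a < n, b < n)
    if val a == i then
      (if val b == i then (if x.2 then 2 else 0)
       else if val b == i.+1 then (if x.2 then -1 else 1) else 0)
    else if val a == i.+1 then
      (if val b == i then (if x.2 then 1 else -1)
       else if val b == i.+1 then (if x.2 then 0 else 2) else 0)
    else (val a == val b)%:R.

Definition rho (n m : nat) (w : word n) : 'M['Z_m]_n :=
  foldr (fun x M => burau_gen m x *m M) 1%:M w.

(* Membership (of a representative word) in B_n[m] = ker rho_m. *)
Definition in_congr (n m : nat) (w : word n) : Prop := rho m w = 1%:M.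

Definition commw n (u v : word n) : word n := u ++ v ++ winv u ++ winv v.

(* Relations of B_n / [B_n[m],B_n[m]] (p): braid relations, all commutators
   of elements of B_n[m], and sigma_1^p (taking the normal closure is
   automatic since we take the congruence closure). *)
Inductive quot_rel (n m p : nat) : word n -> word n -> Prop :=
| qr_braid u v : braid_rel u v -> quot_rel m p u v
| qr_comm u v : in_congr m u -> in_congr m v -> quot_rel m p (commw u v) [::]
| qr_pow (i : 'I_(n.-1)) : val i = 0%N -> quot_rel m p (nseq p (i, true)) [::].

Definition quot_eq n m p : word n -> word n -> Prop := cong_closure (@quot_rel n m p).

(* Main.v *)
Require Import Defs.
From mathcomp Require Import all_boot all_order all_algebra.
From mathcomp Require Import ring zify.
Set Implicit Arguments. Unset Strict Implicit. Unset Printing Implicit Defensive.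
Import GRing.Theory.
Local Open Scope ring_scope.

Lemma Zp_char m : (1 < m)%N -> (m%:R : 'Z_m) = 0.
Proof. by move=> hm; apply: val_inj; rewrite /= val_Zp_nat // modnn. Qed.

Lemma burau_split n m (i : 'I_n.-1) (hi : (val i < n)%N) (hj : ((val i).+1 < n)%N) :
  let ii := Ordinal hi in let jj := Ordinal hj in
  burau_gen m (i, true) = 1%:M + (delta_mx ii (0 : 'I_1) + delta_mx jj (0 : 'I_1)) *m (delta_mx (0 : 'I_1) ii - delta_mx (0 : 'I_1) jj) :> 'M['Z_m]_n.
Proof.
move=> ii jj; apply/matrixP => a b.
rewrite !mxE big_ord1 !mxE /= -!val_eqE /=.
case: (val a =P val i) => h1; case: (val a =P (val i).+1) => h2;
case: (val b =P val i) => h3; case: (val b =P (val i).+1) => h4;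
case: (val a =P val b) => h5; rewrite /= ?eqxx; try (exfalso; lia); ring.
Qed.

Lemma rho_nseq n m (x : letter n) (N : 'M['Z_m]_n) :
  burau_gen m x = 1%:M + N -> N *m N = 0 ->
  forall k, rho m (nseq k x) = 1%:M + k%:R *: N.
Proof.
move=> hB hN; elim=> [|k IH]; first by rewrite /rho /= scale0r addr0.
have -> : rho m (nseq k.+1 x) = burau_gen m x *m rho m (nseq k x) by [].
rewrite IH hB mulmxDl mul1mx mulmxDr mulmx1.
rewrite -scalemxAr hN scaler0 addr0 mulrS scalerDl scale1r.
by rewrite -addrA (addrC N).
Qed.

Lemma NN n m (i j : 'I_n) : i != j ->
  let N := (delta_mx i (0 : 'I_1) + delta_mx j (0 : 'I_1)) *m (delta_mx (0 : 'I_1) i - delta_mx (0 : 'I_1) j) :> 'M['Z_m]_n in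
  N *m N = 0.
Proof.
move=> hij N.
set u := (delta_mx i (0 : 'I_1) + delta_mx j (0 : 'I_1)) : 'M['Z_m]_(n,1).
set v := (delta_mx (0 : 'I_1) i - delta_mx (0 : 'I_1) j) : 'M['Z_m]_(1,n).
have H : v *m u = 0.
  rewrite /u /v mulmxBl !mulmxDr !mul_delta_mx (mul_delta_mx_0 _ _ _ hij) mul_delta_mx_0 1?eq_sym //.
  by rewrite !addr0 add0r subrr.
by rewrite /N -mulmxA [v *m (u *m v)]mulmxA H mul0mx mulmx0.
Qed.

Lemma gen_congr n m (i : 'I_n.-1) : (2 < n)%N -> (1 < m)%N ->
  in_congr m (nseq m (i, true)).
Proof.
move=> hn hm.
have hI : (val i < n - 1)%N by rewrite subn1; exact: ltn_ord.
have hi : (val i < n)%N by lia.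
have hj : ((val i).+1 < n)%N by lia.
rewrite /in_congr (rho_nseq (burau_split m hi hj)).
  by rewrite Zp_char // scale0r addr0.
apply: NN; rewrite -val_eqE /=; lia.
Qed.
Local Close Scope ring_scope.
From Stdlib Require Import Setoid Morphisms.
Set Implicit Arguments. Unset Strict Implicit. Unset Printing Implicit Defensive.

#[export] Instance qe_equiv n m p : Equivalence (@quot_eq n m p).
Proof. split; [exact: cc_refl | exact: cc_sym | exact: cc_trans]. Qed.

#[export] Instance cat_proper n m p :
  Proper (@quot_eq n m p ==> @quot_eq n m p ==> @quot_eq n m p) (@cat (letter n)).
Proof. by move=> u u' hu v v' hv; apply: cc_cat. Qed.

Definition pw n (w : word n) k : word n := flatten (nseq k w).

Lemma pwS n (w : word n) k : pw w k.+1 = w ++ pw w k.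
Proof. by []. Qed.

Lemma pwD n (w : word n) a b : pw w (a + b) = pw w a ++ pw w b.
Proof. by elim: a => //= a IH; rewrite !pwS IH catA. Qed.

Lemma pwM n (w : word n) a b : pw w (a * b) = pw (pw w a) b.
Proof. by elim: b => [|b IH]; rewrite ?muln0 // mulnS pwD IH. Qed.

Lemma winvK n (w : word n) : winv (winv w) = w.
Proof.
rewrite /winv map_rev revK -map_comp -[RHS]map_id; apply: eq_map => -[i b] /=.
by rewrite negbK.
Qed.

Lemma winv_cat n (u v : word n) : winv (u ++ v) = winv v ++ winv u.
Proof. by rewrite /winv map_cat rev_cat. Qed.

#[export] Instance pw_proper n m p : Proper (@quot_eq n m p ==> eq ==> @quot_eq n m p) (@pw n).
Proof.
move=> u v h k _ <-; elim: k => [|k IH]; first reflexivity.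
by rewrite !pwS; apply: cc_cat.
Qed.

Section G.
Context (n m p : nat).
Local Notation E := (@quot_eq n m p).
Local Infix "~~" := E (at level 70).



Lemma rel (u v : word n) : quot_rel m p u v -> u ~~ v.
Proof. exact: cc_base. Qed.

Lemma inv_r (u : word n) : u ++ winv u ~~ [::].
Proof.
elim: u => [|[i b] u IH] /=; first reflexivity.
rewrite /winv /= rev_cons -cats1 -/(winv u).
have -> : (i, b) :: u ++ winv u ++ [:: (i, ~~ b)] = [:: (i, b)] ++ (u ++ winv u) ++ [:: (i, ~~ b)].
  by rewrite /= catA.
rewrite IH /=; apply: rel; apply: qr_braid; exact: br_free.
Qed.

Lemma inv_l (u : word n) : winv u ++ u ~~ [::].
Proof. by have := inv_r (winv u); rewrite winvK. Qed.

Lemma cancel_l (u v w : word n) : u ++ v ~~ u ++ w -> v ~~ w.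
Proof.
move=> h; rewrite -[v]cat0s -[w]cat0s -(inv_l u) -!catA h; reflexivity.
Qed.

Lemma cancel_r (u v w : word n) : v ++ u ~~ w ++ u -> v ~~ w.
Proof.
move=> h; rewrite -[v]cats0 -[w]cats0 -(inv_r u) !catA h; reflexivity.
Qed.

Definition cm (u v : word n) := u ++ v ~~ v ++ u.

Lemma cm_sym u v : cm u v -> cm v u.
Proof. by rewrite /cm => ->; reflexivity. Qed.

Lemma cm_commw u v : commw u v ~~ [::] -> cm u v.
Proof.
move=> h; rewrite /cm.
have h1 : winv u ++ winv v ++ v ++ u ~~ [::].
  by rewrite (catA (winv v)) inv_l /= inv_l; reflexivity.
transitivity ((u ++ v) ++ (winv u ++ winv v ++ v ++ u)).
  by rewrite h1 cats0; reflexivity.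
have -> : (u ++ v) ++ (winv u ++ winv v ++ v ++ u) = commw u v ++ (v ++ u).
  by rewrite /commw !catA.
by rewrite h; reflexivity.
Qed.

Lemma cm_pw u v k : cm u v -> cm (pw u k) v.
Proof.
rewrite /cm => h; elim: k => [|k IH] /=; first by rewrite cats0; reflexivity.
by rewrite pwS -catA IH catA h catA; reflexivity.
Qed.

Lemma cm_inv u v : cm u v -> cm (winv u) v.
Proof.
rewrite /cm => h.
transitivity (winv u ++ (v ++ u) ++ winv u).
  by rewrite -catA inv_r cats0; reflexivity.
by rewrite -h (catA (winv u) (u ++ v)) (catA (winv u) u v) inv_l; reflexivity.
Qed.

Lemma key k (a b : word n) : p = (m * k).+1 ->
  a ++ b ++ a ~~ b ++ a ++ b -> pw a p ~~ [::] ->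
  cm (pw a m) (pw b m) -> a ~~ b.
Proof.
move=> hp hbr hap hc.
have conj : (a ++ b) ++ a ~~ b ++ (a ++ b) by rewrite -catA hbr; reflexivity.
have cp : forall j, (a ++ b) ++ pw a j ~~ pw b j ++ (a ++ b).
  elim=> [|j IH]; first by rewrite cats0; reflexivity.
  by rewrite !pwS catA conj -catA IH catA; reflexivity.
have hbp : pw b p ~~ [::].
  apply: (@cancel_r (a ++ b)); rewrite -cp hap cats0; reflexivity.
have ex : forall x, pw x p ~~ [::] -> x ~~ winv (pw (pw x m) k).
  move=> x hx0; rewrite -pwM.
  have hx : x ++ pw x (m * k) ~~ [::] by rewrite -pwS -hp.
  transitivity ((x ++ pw x (m * k)) ++ winv (pw x (m * k))).
    by rewrite -catA inv_r cats0; reflexivity.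
  by rewrite hx; reflexivity.
have hab : cm a b.
  rewrite /cm (ex a hap) (ex b hbp).
  apply: cm_inv; apply: cm_sym; apply: cm_inv; apply: cm_pw; apply: cm_sym.
  exact: cm_pw.
apply: (@cancel_l a); apply: (@cancel_l b).
rewrite catA -hab -catA hbr; reflexivity.
Qed.

End G.

Lemma pw1 n (x : letter n) k : pw [:: x] k = nseq k x.
Proof. by elim: k => // k IH; rewrite pwS IH. Qed.

Lemma pw0 n k : pw ([::] : word n) k = [::].
Proof. by elim: k. Qed.

Definition g (p n : nat) (w : word n) : nat :=
  foldr (fun x acc => (if x.2 then 1 else p.-1) + acc)%N 0%N w.

Lemma gcat p n (u v : word n) : g p (u ++ v) = (g p u + g p v)%N.
Proof. by elim: u => //= x u ->; rewrite addnA. Qed.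

Lemma g_pw1 p n (i : 'I_n.-1) j : g p (pw [:: (i, true)] j) = j.
Proof. by rewrite pw1; elim: j => //= j ->. Qed.

Lemma g_winv p n (w : word n) : (0 < p)%N -> (g p w + g p (winv w) = size w * p)%N.
Proof.
move=> hp; elim: w => //= x w IH.
rewrite -[winv (x :: w)]/(winv ([:: x] ++ w)) winv_cat gcat /=.
case: x.2 => /=; rewrite mulSn -IH; lia.
Qed.

Lemma g_rel n m p (u v : word n) : (0 < p)%N -> quot_rel m p u v -> g p u = g p v %[mod p].
Proof.
move=> hp [u' v' [i b|i j _|i j _]|u' v' _ _|i _] //=.
- by case: b => /=; rewrite addn0 ?addn1 ?add1n prednK // modnn mod0n.
- rewrite /commw !gcat.
  have h1 := g_winv u' hp; have h2 := g_winv v' hp.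
  have -> : (g p u' + (g p v' + (g p (winv u') + g p (winv v'))) = (size u' + size v') * p)%N by lia.
  by rewrite modnMl mod0n.
- have gn : forall q, g p (nseq q (i, true)) = q by elim=> //= q ->.
  rewrite gn.
  by rewrite modnn mod0n.
Qed.

Lemma g_eq n m p (u v : word n) : (0 < p)%N -> quot_eq m p u v -> g p u = g p v %[mod p].
Proof.
move=> hp; elim=> {u v} [u v h|u|u v _ IH|u v w _ IH1 _ IH2|u u' v v' _ IH1 _ IH2].
- exact: (g_rel hp h).
- by [].
- by rewrite IH.
- by rewrite IH1.
- by rewrite !gcat -modnDm IH1 IH2 modnDm.
Qed.

Section H.
Context (n m k : nat) (hn : (2 < n)%N) (hm : (1 < m)%N).
Local Notation p := (m * k).+1.
Local Notation E := (@quot_eq n m p).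
Local Infix "~~" := E (at level 70).

Lemma gen_all (i0 : 'I_n.-1) : val i0 = 0%N ->
  forall i : 'I_n.-1, [:: (i, true)] ~~ [:: (i0, true)].
Proof.
move=> h0 [j hj]; elim: j hj => [|j IH] hj.
  have e : Ordinal hj = i0 by apply: val_inj.
  by rewrite e; reflexivity.
have hj' : (j < n.-1)%N by apply: ltnW.
rewrite -(IH hj').
symmetry; apply: (@key n m p k) => //.
- apply: rel; apply: qr_braid; exact: br_near.
- rewrite (IH hj') pw1; apply: rel; exact: qr_pow.
- by apply: cm_commw; apply: rel; apply: qr_comm; rewrite pw1; apply: gen_congr.
Qed.

Lemma s1p (i0 : 'I_n.-1) : val i0 = 0%N -> pw [:: (i0, true)] p ~~ [::].
Proof. by move=> h0; rewrite pw1; apply: rel; exact: qr_pow. Qed.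

Lemma letter_norm (i0 : 'I_n.-1) : val i0 = 0%N -> forall x : letter n,
  [:: x] ~~ pw [:: (i0, true)] (if x.2 then 1 else p.-1).
Proof.
move=> h0 [i []] /=.
  by rewrite pwS cats0 (gen_all h0 i); reflexivity.
have hp : pw [:: (i, true)] p ~~ [::] by rewrite (gen_all h0 i); exact: s1p.
transitivity ([:: (i, false)] ++ pw [:: (i, true)] p).
  by rewrite hp; reflexivity.
rewrite pwS catA.
have -> : [:: (i, false)] ++ [:: (i, true)] = [:: (i, false); (i, ~~ false)] by [].
rewrite (rel (qr_braid m p (br_free i false))) /= (gen_all h0 i); reflexivity.
Qed.

Lemma word_norm (i0 : 'I_n.-1) : val i0 = 0%N -> forall w : word n,
  w ~~ pw [:: (i0, true)] (g p w).
Proof.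
move=> h0; elim=> [|x w IH] /=; first reflexivity.
rewrite pwD -IH -(letter_norm h0 x); reflexivity.
Qed.

Lemma pw_mod (i0 : 'I_n.-1) : val i0 = 0%N -> forall q,
  pw [:: (i0, true)] q ~~ pw [:: (i0, true)] (q %% p).
Proof.
move=> h0 q; rewrite {1}(divn_eq q p) pwD (mulnC (q %/ p)) pwM (s1p h0) pw0; reflexivity.
Qed.

End H.

Unset Implicit Arguments.
Local Open Scope ring_scope.

Theorem proposition3p1 (n m k : nat) :
  (3 <= n)%N -> (2 <= m)%N -> (1 <= k)%N ->
  (exists s : seq (word n), forall w : word n,
      exists2 w', w' \in s & quot_eq m (m * k).+1 w w') /\
  (exists f : word n -> 'Z_((m * k).+1),
      (forall u v, f (u ++ v) = f u + f v) /\
      (forall z, exists w, f w = z) /\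
      (forall u v, quot_eq m (m * k).+1 u v <-> f u = f v)).
Proof.
move=> hn hm hk.
have h0 : (0 < n.-1)%N by rewrite -subn1; lia.
pose i0 : 'I_n.-1 := Ordinal h0.
have hi0 : val i0 = 0%N by [].
have hp1 : (1 < (m * k).+1)%N by rewrite ltnS muln_gt0; apply/andP; split; lia.
have WN := @word_norm n m k hn hm i0 hi0.
have PM := @pw_mod n m k i0 hi0.
split.
  exists [seq pw [:: (i0, true)] j | j <- iota 0 (m * k).+1] => w.
  exists (pw [:: (i0, true)] (g (m * k).+1 w %% (m * k).+1)).
    by apply: map_f; rewrite mem_iota add0n ltn_pmod.
  by rewrite -PM -WN; reflexivity.
exists (fun w => (g (m * k).+1 w)%:R : 'Z_((m * k).+1)).
split; [|split].
- by move=> u v; rewrite gcat natrD.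
- move=> z; exists (pw [:: (i0, true)] z); rewrite g_pw1.
  apply: val_inj; rewrite /= val_Zp_nat // modn_small //.
  by have := ltn_ord z; rewrite [X in (_ < X)%N -> _]Zp_cast.
- move=> u v; split.
  + move/(g_eq (ltn0Sn _)) => h.
    by rewrite -(Zp_nat_mod hp1) h Zp_nat_mod.
  + move=> h.
    have e : (g (m * k).+1 u %% (m * k).+1 = g (m * k).+1 v %% (m * k).+1)%N.
      by have := congr1 val h; rewrite /= !val_Zp_nat.
    by rewrite (WN u) PM e -PM -WN; reflexivity.
Qed.
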